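(* For every finite graph $\Gamma$ there is a finite group $G$ such that $\Gamma$ is isomorphic to an induced subgraph of the difference graph $\mathcal{D}(G)$. Moreover, $G$ can be chosen to be a cyclic group of squarefree order.
   Context: For a finite group $G$ with identity $e$: the intersection power graph $\mathcal{G}_I(G)$ has vertex set $G$, two distinct non-identity vertices $x,y$ being adjacent iff $\langle x\rangle\cap\langle y\rangle\neq\{e\}$, and $e$ being adjacent to every other vertex. The power graph $\mathcal{P}(G)$ has vertex set $G$, two distinct vertices being adjacent iff one is a power of the other. The difference graph $\mathcal{D}(G)$ is the graph with edge set $E(\mathcal{G}_I(G))\setminus E(\mathcal{P}(G))$ on vertex set $G$, with all isolated vertices removed. *)

(* Defs.v *)
From mathcomp Require Import all_boot all_fingroup.
Set Implicit Arguments. Unset Strict Implicit. Unset Printing Implicit Defensive.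
Local Open Scope group_scope.

Definition squarefree (n : nat) : Prop :=
  forall p : nat, prime p -> ~ (p * p %| n)%N.

Section Graphs.
Variable gT : finGroupType.

Definition ip_adj (x y : gT) : Prop :=
  x <> y /\ (x = 1 \/ y = 1 \/ <[x]> :&: <[y]> <> 1%G).

Definition pow_adj (x y : gT) : Prop :=
  x <> y /\ ((exists k : nat, x = y ^+ k) \/ (exists k : nat, y = x ^+ k)).

Definition diff_adj (x y : gT) : Prop := ip_adj x y /\ ~ pow_adj x y.

(* Vertex set of D(G): non-isolated vertices. *)
Definition diff_vertex (x : gT) : Prop := exists y : gT, diff_adj x y.
End Graphs.

Definition induced_in_diff_graph (V : finType) (adj : rel V) (gT : finGroupType) : Prop :=
  exists f : V -> gT,
    injective f /\ (forall v, diff_vertex (f v)) /\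
    (forall u v, adj u v <-> diff_adj (f u) (f v)).

(* Main.v *)
Require Import Defs.
From mathcomp Require Import all_boot all_fingroup all_solvable.
Set Implicit Arguments. Unset Strict Implicit. Unset Printing Implicit Defensive.
From mathcomp Require Import zmodp.
From Stdlib Require Setoid.

Section Grp.
Local Open Scope group_scope.
Variable gT : finGroupType.
Hypothesis cycT : cyclic [set: gT].

Lemma mem_cycle_dvd (x y : gT) : (x \in <[y]>) = (#[x] %| #[y])%N.
Proof.
by rewrite -cycle_subG -(cardSg_cyclic cycT) ?subsetT.
Qed.

Lemma diff_adjE (x y : gT) :
  diff_adj x y <->
  ((exists p, prime p /\ (p %| #[x])%N /\ (p %| #[y])%N) /\
   ~~ (#[x] %| #[y])%N /\ ~~ (#[y] %| #[x])%N).
Proof.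
rewrite /diff_adj /ip_adj /pow_adj.
have powE : forall a b : gT, (exists k : nat, a = b ^+ k) <-> (#[a] %| #[b])%N.
  by move=> a b; rewrite -mem_cycle_dvd; split; move/cycleP.
split.
- case=> [[neq ip] npow].
  have nxy : ~~ (#[x] %| #[y])%N.
    by apply/negP => /powE h; apply: npow; split => //; left.
  have nyx : ~~ (#[y] %| #[x])%N.
    by apply/negP => /powE h; apply: npow; split => //; right.
  split; last by split.
  have nI : <[x]> :&: <[y]> <> 1%G.
    case: ip => [x1|[y1|//]].
    + by move: nxy; rewrite x1 order1 dvd1n.
    + by move: nyx; rewrite y1 order1 dvd1n.
  have gt1 : (1 < #|<[x]> :&: <[y]>|)%N.
    rewrite ltnNge -(trivg_card_le1 [group of <[x]> :&: <[y]>]).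
    by apply/negP => /eqP /= h; apply: nI; apply/val_inj => /=; rewrite h.
  exists (pdiv #|<[x]> :&: <[y]>|); split; first exact: pdiv_prime.
  have hd := pdiv_dvd #|<[x]> :&: <[y]>|.
  split; apply: dvdn_trans hd _; rewrite orderE; apply: cardSg.
    exact: subsetIl.
  exact: subsetIr.
- case=> [[p [pp [px py]]] [nxy nyx]].
  split; last first.
    by case=> _ [/powE h|/powE h]; [move: nxy|move: nyx]; rewrite h.
  split; first by move=> e; move: nxy; rewrite e dvdnn.
  right; right => h.
  set z := x ^+ (#[x] %/ p).
  have oz : #[z] = p by rewrite /z orderXdiv ?dvdn_div // divnA // mulKn // order_gt0.
  have zx : z \in <[x]> by rewrite mem_cycle.
  have zy : z \in <[y]> by rewrite mem_cycle_dvd oz.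
  have : z \in <[x]> :&: <[y]> by rewrite inE zx zy.
  rewrite h inE => /eqP z1.
  by move: (prime_gt1 pp); rewrite -oz z1 order1.
Qed.
End Grp.

Section Num.
Variable L : finType.

Definition nextp m := s2val (prime_above m).
Fixpoint qp k := if k is k'.+1 then nextp (qp k') else 2.
Lemma qp_prime k : prime (qp k).
Proof. by case: k => [|k] //=; rewrite /nextp; case: (prime_above _). Qed.
Lemma qp_lt k : qp k < qp k.+1.
Proof. by rewrite /= /nextp; case: (prime_above _). Qed.
Lemma qp_inj : injective qp.
Proof.
have mono : forall m n, m < n -> qp m < qp n.
  move=> m n; elim: n => // n IH; rewrite ltnS leq_eqVlt => /orP[/eqP->|/IH h].
    exact: qp_lt.
  exact: ltn_trans h (qp_lt n).
move=> m n e; case: (ltngtP m n) => // h; have := mono _ _ h; by rewrite e ltnn.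
Qed.

Definition Pl (l : L) := qp (enum_rank l).
Lemma Pl_inj : injective Pl.
Proof. by move=> a b /qp_inj /val_inj /fintype.enum_rank_inj. Qed.
Lemma Pl_prime l : prime (Pl l). Proof. exact: qp_prime. Qed.

Definition dd (S : {set L}) := \prod_(l in S) Pl l.

Lemma dvd_dd p (S : {set L}) : prime p -> p %| dd S -> exists2 l, l \in S & p = Pl l.
Proof.
move=> pp; rewrite /dd Euclid_dvd_prod // big_orE => /existsP [l /andP [lS]].
by rewrite dvdn_prime2 ?Pl_prime // => /eqP ->; exists l.
Qed.

Lemma Pl_dvd l (S : {set L}) : l \in S -> Pl l %| dd S.
Proof. by move=> lS; rewrite /dd (bigD1 l) //= dvdn_mulr. Qed.

Lemma Pl_dvdE l (S : {set L}) : (Pl l %| dd S) = (l \in S).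
Proof.
apply/idP/idP; last exact: Pl_dvd.
by move/(dvd_dd (Pl_prime l)) => [m mS /Pl_inj ->].
Qed.

Lemma dd_subE (S T : {set L}) : (dd S %| dd T) = (S \subset T).
Proof.
apply/idP/idP.
  move=> h; apply/subsetP => l lS; rewrite -Pl_dvdE; exact: dvdn_trans (Pl_dvd lS) h.
move=> sST; rewrite /dd [X in _ %| X](big_setID S) /=.
have -> : \prod_(i in T :&: S) Pl i = \prod_(i in S) Pl i.
  apply: eq_bigl => i; rewrite inE; case: (boolP (i \in S)) => h.
    by rewrite (subsetP sST).
  by rewrite andbF.
exact: dvdn_mulr.
Qed.

Lemma dd_gt0 (S : {set L}) : 0 < dd S.
Proof. by rewrite /dd prodn_gt0 // => l; rewrite prime_gt0 ?Pl_prime. Qed.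

Lemma dd_sqf : squarefree (dd setT).
Proof.
move=> p pp H.
have pd : p %| dd setT by apply: dvdn_trans H; apply: dvdn_mulr.
case: (dvd_dd pp pd) => l _ pl; subst p.
move: H; rewrite /dd (bigD1 l) //= dvdn_pmul2l ?prime_gt0 ?Pl_prime //.
rewrite Euclid_dvd_prod ?Pl_prime // big_orE => /existsP [m /andP [/andP [_ ml]]].
by rewrite dvdn_prime2 ?Pl_prime // => /eqP /Pl_inj e; rewrite e eqxx in ml.
Qed.

End Num.

Section Elt.
Local Open Scope group_scope.
Variable L : finType.
Let n := dd [set: L].
Let T := 'I_n.-1.+1.
Let g : T := Zp1.

Lemma n_gt0 : (0 < n)%N. Proof. exact: dd_gt0. Qed.

Lemma cycT : cyclic [set: T].
Proof. by apply/cyclicP; exists g; exact: Zp_cycle. Qed.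

Lemma cardT_n : #|T| = n.
Proof. by rewrite card_ord prednK // n_gt0. Qed.

Definition elt (S : {set L}) : T := g ^+ (n %/ dd S).

Lemma order_elt S : #[elt S] = dd S.
Proof.
have og : #[g] = n by rewrite /g order_Zp1 prednK // n_gt0.
rewrite /elt orderXdiv og ?dvdn_div ?dd_subE ?subsetT //.
by rewrite divnA ?dd_subE ?subsetT // mulKn // n_gt0.
Qed.

Lemma diff_elt (S R : {set L}) :
  diff_adj (elt S) (elt R) <->
  ((exists l, l \in S /\ l \in R) /\ ~~ (S \subset R) /\ ~~ (R \subset S)).
Proof.
rewrite (diff_adjE cycT) !order_elt !dd_subE.
split.
  case=> [[x [h1 [h2 h2']]] h3]; split => //.
  case: (dvd_dd h1 h2) => l lS e; exists l; split => //.
  by rewrite -Pl_dvdE -e.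
case=> [[x [h1 h2]] h3]; split => //.
by exists (Pl x); rewrite Pl_prime !Pl_dvdE.
Qed.
End Elt.

Theorem theorem3p8 (V : finType) (adj : rel V)
  (adj_sym : symmetric adj) (adj_irr : irreflexive adj) :
  exists gT : finGroupType,
    cyclic [set: gT] /\ squarefree #|gT| /\ induced_in_diff_graph adj gT.
Proof.
pose L := option ((V + V) + (V + (V * V)))%type.
pose inS (v : V) : {set L} := [set l : L | match l with
   | Some (inl (inl a)) => a == v
   | Some (inl (inr a)) => a == v
   | Some (inr (inr (a, b))) => adj a b && ((a == v) || (b == v))
   | _ => false end].
pose inW (v : V) : {set L} := [set l : L | match l with
   | Some (inl (inr a)) => a == v
   | Some (inr (inl a)) => a == v
   | _ => false end].
exists ('I_(dd [set: L]).-1.+1 : finGroupType).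
split; first exact: cycT.
split; first by rewrite cardT_n; exact: dd_sqf.
exists (fun v => elt (inS v)); split; last split.
- move=> u v e.
  have : (dd (inS u) %| dd (inS v))%N.
    by rewrite -(order_elt (inS u)) e order_elt.
  rewrite dd_subE => /subsetP /(_ (Some (inl (inl u)))).
  by rewrite !inE /= eqxx => /(_ isT) /eqP.
- move=> v; exists (elt (inW v)); apply/diff_elt.
  split; first by exists (Some (inl (inr v))); rewrite !inE /= eqxx.
  split; apply/subsetPn.
    by exists (Some (inl (inl v))); rewrite !inE /= ?eqxx.
  by exists (Some (inr (inl v))); rewrite !inE /= ?eqxx.
- move=> u v; rewrite diff_elt.
  case: (eqVneq u v) => [<-|neq].
    rewrite adj_irr; split => //.
    by case=> _ [/negP []]; apply: subxx.
  split.
    move=> auv; split.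
      by exists (Some (inr (inr (u, v)))); rewrite !inE /= auv !eqxx ?orbT.
    split; apply/subsetPn.
      by exists (Some (inl (inl u))); rewrite /inS !inE /=.
    by exists (Some (inl (inl v))); rewrite /inS !inE /= // eq_sym.
  case=> [[l [lu lv]] _].
  case: l lu lv => [[[a|a]|[a|[a b]]]|]; rewrite !inE //=.
  + by move=> /eqP -> /eqP e; rewrite e eqxx in neq.
  + by move=> /eqP -> /eqP e; rewrite e eqxx in neq.
  + move=> /andP [ab /orP [/eqP au|/eqP bu]] /andP [_ /orP [/eqP av|/eqP bv]].
    * by subst; rewrite eqxx in neq.
    * by subst.
    * by subst; rewrite adj_sym.
    * by subst; rewrite eqxx in neq.
Qed.
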